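(* Let $T$ be an $\mathcal O$-operator on a Lie algebra $\mathfrak g$ with respect to a representation $(V;\rho)$. Then for any Nijenhuis element $x\in\mathrm{Nij}(T)$, setting $\mathfrak T:=d_{\bar\rho}x$, i.e. $\mathfrak T(u)=[Tu,x]+T\rho(x)(u)$, the family $T_t:=T+t\mathfrak T$ is a trivial one-parameter infinitesimal deformation of $T$.
   Context: An $\mathcal O$-operator: linear $T:V\to\mathfrak g$ with $[Tu,Tv]=T(\rho(Tu)(v)-\rho(Tv)(u))$. An element $x\in\mathfrak g$ is a Nijenhuis element associated to $T$ (written $x\in\mathrm{Nij}(T)$) if $[[x,y],[x,z]]=0$ for all $y,z\in\mathfrak g$, $\rho([x,y])\rho(x)=0$ for all $y\in\mathfrak g$, and $[x,[Tu,x]+T\rho(x)(u)]=0$ for all $u\in V$. A one-parameter infinitesimal deformation of $T$ is $T+t\mathfrak T$ ($\mathfrak T:V\to\mathfrak g$ linear) which is an $\mathcal O$-operator for every scalar $t$; it is trivial if there is $x\in\mathfrak g$ such that $(\mathrm{Id}_{\mathfrak g}+t\,\mathrm{ad}_x,\mathrm{Id}_V+t\rho(x))$ is a homomorphism from $T+t\mathfrak T$ to $T$, where a homomorphism from an $\mathcal O$-operator $T'$ to $T$ is a pair of a Lie algebra homomorphism $\phi_{\mathfrak g}:\mathfrak g\to\mathfrak g$ and a linear $\phi_V:V\to V$ with $T\circ\phi_V=\phi_{\mathfrak g}\circ T'$ and $\phi_V\rho(y)(u)=\rho(\phi_{\mathfrak g}(y))(\phi_V(u))$ for all $y\in\mathfrak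 g,u\in V$. *)

(* Defs.v *)
From HB Require Import structures.
From mathcomp Require Import all_boot all_order all_algebra.
Set Implicit Arguments. Unset Strict Implicit. Unset Printing Implicit Defensive.
Import GRing.Theory.
Local Open Scope ring_scope.

Section Lie.
Variable K : fieldType.

Definition klinear (U W : lmodType K) (f : U -> W) : Prop :=
  forall (a : K) (u v : U), f (a *: u + v) = a *: f u + f v.

Record is_lie_bracket (g : lmodType K) (br : g -> g -> g) : Prop := {
  br_linl : forall z : g, klinear (fun x => br x z);
  br_linr : forall x : g, klinear (br x);
  br_alt : forall x : g, br x x = 0;
  br_jacobi : forall x y z : g,
    br x (br y z) + br y (br z x) + br z (br x y) = 0 }.

Record is_lie_rep (g V : lmodType K) (br : g -> g -> g) (rho : g -> V -> V)
  : Prop := {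
  rho_linl : forall (a : K) (x y : g) (u : V),
    rho (a *: x + y) u = a *: rho x u + rho y u;
  rho_linr : forall x : g, klinear (rho x);
  rho_br : forall (x y : g) (u : V),
    rho (br x y) u = rho x (rho y u) - rho y (rho x u) }.

Definition O_operator (g V : lmodType K) (br : g -> g -> g) (rho : g -> V -> V)
  (T : V -> g) : Prop :=
  klinear T /\
  forall u v : V, br (T u) (T v) = T (rho (T u) v - rho (T v) u).

Definition Nij (g V : lmodType K) (br : g -> g -> g) (rho : g -> V -> V)
  (T : V -> g) (x : g) : Prop :=
  (forall y z : g, br (br x y) (br x z) = 0) /\
  (forall (y : g) (u : V), rho (br x y) (rho x u) = 0) /\
  (forall u : V, br x (br (T u) x + T (rho x u)) = 0).

Definition lie_hom (g : lmodType K) (br : g -> g -> g) (phi : g -> g) : Prop :=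
  klinear phi /\ forall y z : g, phi (br y z) = br (phi y) (phi z).

Definition O_hom (g V : lmodType K) (br : g -> g -> g) (rho : g -> V -> V)
  (T' T : V -> g) (phig : g -> g) (phiV : V -> V) : Prop :=
  [/\ lie_hom br phig, klinear phiV,
      (forall u : V, T (phiV u) = phig (T' u)) &
      (forall (y : g) (u : V), phiV (rho y u) = rho (phig y) (phiV u))].

Definition inf_deformation (g V : lmodType K) (br : g -> g -> g)
  (rho : g -> V -> V) (T TT : V -> g) : Prop :=
  klinear TT /\
  forall t : K, O_operator br rho (fun u => T u + t *: TT u).

Definition trivial_inf_deformation (g V : lmodType K) (br : g -> g -> g)
  (rho : g -> V -> V) (T TT : V -> g) : Prop :=
  inf_deformation br rho T TT /\
  exists x : g, forall t : K,
    O_hom br rho (fun u => T u + t *: TT u) T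
      (fun y => y + t *: br x y) (fun u => u + t *: rho x u).

End Lie.

(* Main.v *)
Require Import Defs.
From HB Require Import structures.
From mathcomp Require Import all_boot all_order all_algebra.
Import GRing.Theory.
Local Open Scope ring_scope.

Lemma klinD {K : fieldType} {U W : lmodType K} {f : U -> W} :
  klinear f -> forall u v, f (u + v) = f u + f v.
Proof. by move=> H u v; have := H 1 u v; rewrite !scale1r. Qed.

Lemma klin0 {K : fieldType} {U W : lmodType K} {f : U -> W} :
  klinear f -> f 0 = 0.
Proof.
by move=> H; have := klinD H 0 0; rewrite addr0 => /eqP; rewrite -subr_eq subrr eq_sym => /eqP.
Qed.

Lemma klinZ {K : fieldType} {U W : lmodType K} {f : U -> W} :
  klinear f -> forall a u, f (a *: u) = a *: f u.
Proof. by move=> H a u; have := H a u 0; rewrite addr0 klin0 // addr0. Qed.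

Lemma klinN {K : fieldType} {U W : lmodType K} {f : U -> W} :
  klinear f -> forall u, f (- u) = - f u.
Proof. by move=> H u; rewrite -scaleN1r klinZ // scaleN1r. Qed.

Lemma klinB {K : fieldType} {U W : lmodType K} {f : U -> W} :
  klinear f -> forall u v, f (u - v) = f u - f v.
Proof. by move=> H u v; rewrite klinD // klinN. Qed.

Lemma expand2 (K : fieldType) (U : lmodType K) (t : K) (a b c : U) :
  a + t *: b + (t * t) *: c = a + t *: (b + t *: c).
Proof. by rewrite scalerDr scalerA addrA. Qed.

Lemma zid (M : zmodType) (A1 A2 A3 A4 B1 B2 : M) :
  (A1 - A2) + (A3 - A4) = (A1 - B1 - (A4 - B2)) + (B1 + A3 - (B2 + A2)).
Proof.
rewrite !opprD !opprK !addrA.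
rewrite (addrAC _ B2 B1) (addrAC _ (-A4) B1) subrK.
rewrite (addrAC _ B2 A3) addrK (addrAC A1 (-A4) A3) (addrAC A1 (-A2) A3) (addrAC _ (-A2) (-A4)).
done.
Qed.

Lemma klin_comb {K : fieldType} {U W : lmodType K} (f h : U -> W) (t : K) :
  klinear f -> klinear h -> klinear (fun u => f u + t *: h u).
Proof.
move=> Hf Hh a u v; rewrite Hf Hh scalerDr !scalerA mulrC -scalerA.
by rewrite scalerDr addrACA.
Qed.
Lemma klin_id {K : fieldType} {U : lmodType K} : klinear (fun u : U => u).
Proof. by []. Qed.

Theorem theorem4p9 (K : fieldType) (g V : lmodType K)
  (br : g -> g -> g) (rho : g -> V -> V) (T : V -> g) (x : g) :
  is_lie_bracket br -> is_lie_rep br rho -> O_operator br rho T ->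
  Nij br rho T x ->
  trivial_inf_deformation br rho T (fun u => br (T u) x + T (rho x u)).
Proof.
move=> [Ll Lr Alt Jac] [Rl Rr Rbr] [TL TO] [N1 [N2 N3]].
set D := fun u => br (T u) x + T (rho x u).
have brDl : forall y z w, br (y + z) w = br y w + br z w
  by move=> y z w; exact: (klinD (Ll w)).
have brDr : forall y z w, br w (y + z) = br w y + br w z
  by move=> y z w; exact: (klinD (Lr w)).
have brZl : forall a y w, br (a *: y) w = a *: br y w
  by move=> a y w; exact: (klinZ (Ll w)).
have brZr : forall a y w, br w (a *: y) = a *: br w y
  by move=> a y w; exact: (klinZ (Lr w)).
have brNl : forall y w, br (- y) w = - br y w
  by move=> y w; exact: (klinN (Ll w)).
have brNr : forall y w, br w (- y) = - br w y
  by move=> y w; exact: (klinN (Lr w)).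
have br0r : forall w, br w 0 = 0 by move=> w; exact: (klin0 (Lr w)).
have RL : forall u, klinear (fun y => rho y u).
  by move=> u a y z; rewrite Rl.
have rhoDl : forall y z u, rho (y + z) u = rho y u + rho z u
  by move=> y z u; exact: (klinD (RL u)).
have rhoZl : forall a y u, rho (a *: y) u = a *: rho y u
  by move=> a y u; exact: (klinZ (RL u)).
have rho0l : forall u, rho 0 u = 0 by move=> u; exact: (klin0 (RL u)).
have rhoDr : forall y u v, rho y (u + v) = rho y u + rho y v
  by move=> y u v; exact: (klinD (Rr y)).
have rhoZr : forall a y u, rho y (a *: u) = a *: rho y u
  by move=> a y u; exact: (klinZ (Rr y)).
have rhoBr : forall y u v, rho y (u - v) = rho y u - rho y v
  by move=> y u v; exact: (klinB (Rr y)).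
have TD := klinD TL; have TZ := klinZ TL; have TB := klinB TL.
have anti : forall y z, br y z = - br z y.
  move=> y z; apply/eqP; rewrite -addr_eq0; apply/eqP.
  by have := Alt (y + z); rewrite brDl !brDr !Alt add0r addr0.
have der : forall y z, br x (br y z) = br (br x y) z + br y (br x z).
  move=> y z; have := Jac x y z; rewrite (anti z x) brNr (anti z (br x y)) => /eqP.
  by rewrite -addrA -opprD subr_eq0 => /eqP ->; rewrite addrC.
have DL : klinear D.
  move=> a u v; rewrite /D TD TZ brDl brZl rhoDr rhoZr TD TZ.
  by rewrite scalerDr -!addrA; congr (_ + _); rewrite addrCA.
have DE : forall u, D u = T (rho x u) - br x (T u).
  by move=> u; rewrite /D anti addrC.
have xD : forall u, br x (D u) = 0 by move=> u; rewrite /D N3.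
clearbody D.
have rhoTx : forall y v, rho x (rho y v) = rho (br x y) v + rho y (rho x v).
  by move=> y v; rewrite Rbr subrK.
have cocy : forall u v, br (D u) (T v) + br (T u) (D v) =
    T (rho (D u) v - rho (D v) u) + D (rho (T u) v - rho (T v) u).
  move=> u v; rewrite !DE brDl brDr brNl brNr !TO.
  rewrite -[T (rho (T u) v - _)]TO der.
  have rhoBl : forall y z w, rho (y - z) w = rho y w - rho z w.
    by move=> y z w; exact: (klinB (RL w)).
  rewrite !rhoBl !rhoBr !rhoTx.
  rewrite addrACA opprD [in RHS]addrA -!TD; congr (_ + _); last by rewrite opprD.
  by congr T; rewrite -[- _ - - _]opprD; exact: zid.
have Tp : forall u, T (rho x u) = D u + br x (T u) by move=> u; rewrite DE subrK.
have E : forall u v, br (D u) (D v) = D (rho (D u) v - rho (D v) u).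
  move=> u v; set w := rho (D u) v - rho (D v) u.
  have h1 : br (T (rho x u)) (T (rho x v)) = T (rho x w).
    rewrite TO /w rhoBr !rhoTx !xD !rho0l !add0r !Tp !rhoDl !N2 !addr0.
    by [].
  have h2 : br (T (rho x u)) (T (rho x v)) = br (D u) (D v) + br x (T w).
    rewrite !Tp brDl !brDr N1 addr0 -addrA; congr (_ + _).
    have br0l : forall y, br 0 y = 0 by move=> y; exact: (klin0 (Ll y)).
    have -> : br x (T w) = br x (br (D u) (T v) + br (T u) (D v))
      by rewrite cocy brDr xD addr0.
    by rewrite brDr !der !xD br0l br0r add0r addr0.
  have h3 : T (rho x w) = D w + br x (T w) by rewrite Tp.
  by move: h2; rewrite h1 h3 => /addIr.
split.
  split; first exact: DL.
  move=> t; split; first exact: klin_comb.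
  move=> u v.
  have DD := klinD DL; have DZ := klinZ DL.
  rewrite brDl !brDr !brZl !brZr !rhoDl !rhoZl.
  have -> : rho (T u) v + t *: rho (D u) v - (rho (T v) u + t *: rho (D v) u)
    = (rho (T u) v - rho (T v) u) + t *: (rho (D u) v - rho (D v) u)
    by rewrite scalerBr opprD addrACA.
  rewrite TD TZ DD DZ -!addrA -!scalerDr !addrA (addrC (br (T u) (D v))) cocy.
  by rewrite -TO E.
exists x => t; split.
- split; first exact: (@klin_comb K g g (fun y => y) (br x) t klin_id (Lr x)).
  move=> y z; rewrite brDl !brDr !brZl !brZr N1 der.
  by rewrite !scaler0 addr0 -addrA -scalerDr (addrC (br y (br x z))).
- exact: (@klin_comb K V V (fun y => y) (rho x) t klin_id (Rr x)).
- move=> u; rewrite TD TZ brDr brZr xD scaler0 addr0 -addrA -scalerDr -Tp.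
  by [].
- move=> y u; rewrite rhoTx rhoDl rhoZl !rhoDr !rhoZr N2 scaler0 addr0.
  by rewrite -addrA -scalerDr (addrC (rho y (rho x u))).

Qed.
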